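(* Let $c\in(0,\sqrt2)$, $d_2>0$, and for $n_2\in\mathbb{N}_0$ let $\tilde n_2=\frac{n_2}{2d_2}$ and $l_{n_2}(\xi_1)=(2\pi)^4(\xi_1^2+\tilde n_2^2)^2-c^2(2\pi\xi_1)^2+1$. Then $$\min_{\xi_1\in\mathbb{R}}l_{n_2}(\xi_1)=\begin{cases}c^2(2\pi\tilde n_2)^2+1-\frac{c^4}{4}&\text{if }0\le n_2\le\frac{d_2c}{\pi\sqrt2},\\(2\pi\tilde n_2)^4+1&\text{otherwise.}\end{cases}$$ Furthermore, if $n_2\ge\frac{d_2c}{\pi}$, then $l_{n_2}(\xi_1)\ge\frac{(2\pi)^4}{2}(\tilde n_2^2+\xi_1^2)^2$ for all $\xi_1\in\mathbb{R}$. In particular, for every $N\in\mathbb{N}$ with $N>\frac{d_2c}{\pi}$, $$\sum_{n_2=N+1}^{\infty}\left\|\frac{1}{l_{n_2}}\right\|_{L^2(\mathbb{R})}^2\le\frac{5(2d_2)^7}{48(2\pi)^7N^6}.$$ *)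

(* Defs.v *)
From HB Require Import structures.
From mathcomp Require Import all_boot all_order all_algebra.
From mathcomp Require Import all_classical all_reals all_analysis.
Set Implicit Arguments. Unset Strict Implicit. Unset Printing Implicit Defensive.
Import Order.TTheory GRing.Theory Num.Theory.
Local Open Scope ring_scope.

Definition ntilde (R : realType) (d2 : R) (n2 : nat) : R := n2%:R / (2 * d2).

Definition lfun (R : realType) (c d2 : R) (n2 : nat) (xi : R) : R :=
  (2 * pi) ^+ 4 * (xi ^+ 2 + (ntilde d2 n2) ^+ 2) ^+ 2
  - c ^+ 2 * (2 * pi * xi) ^+ 2 + 1.

Definition L2sq_inv_l (R : realType) (c d2 : R) (n2 : nat) : \bar R :=
  (\int[@lebesgue_measure R]_(x in [set: R]) (((lfun c d2 n2 x)^-1) ^+ 2)%:E)%E.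

(* Main.v *)
Require Import Defs.
From HB Require Import structures.
From mathcomp Require Import all_boot all_order all_algebra.
From mathcomp Require Import all_classical all_reals all_analysis.
From mathcomp Require Import ring lra.
From mathcomp Require Import measurable_realfun.
Import Order.TTheory GRing.Theory Num.Theory numFieldNormedType.Exports.
Local Open Scope classical_set_scope.
Local Open Scope ring_scope.

Lemma lfunE (R : realType) (c d2 : R) n xi :
  lfun c d2 n xi = ((2*pi*xi)^+2 + (2*pi*ntilde d2 n)^+2)^+2 - c^+2 * (2*pi*xi)^+2 + 1.
Proof. rewrite /lfun. ring. Qed.

Lemma alg1 (R : realType) (s b c : R) :
  c^+2 * b^+2 + 1 - c^+4/4 <= (s^+2 + b^+2)^+2 - c^+2 * s^+2 + 1.
Proof.
rewrite -subr_ge0.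
have -> : (s^+2 + b^+2)^+2 - c^+2 * s^+2 + 1 - (c^+2 * b^+2 + 1 - c^+4/4)
   = (s^+2 + b^+2 - c^+2/2)^+2 by field.
exact: sqr_ge0.
Qed.

Lemma alg2 (R : realType) (s b c : R) : c^+2 <= 2 * b^+2 ->
  b^+4 + 1 <= (s^+2 + b^+2)^+2 - c^+2 * s^+2 + 1.
Proof.
move=> h; rewrite -subr_ge0.
have -> : (s^+2 + b^+2)^+2 - c^+2 * s^+2 + 1 - (b^+4 + 1)
   = s^+2 * (s^+2 + (2 * b^+2 - c^+2)) by ring.
apply: mulr_ge0; first exact: sqr_ge0.
apply: addr_ge0; first exact: sqr_ge0. by rewrite subr_ge0.
Qed.

Lemma alg3 (R : realType) (s b c : R) : 0 <= c -> c <= b ->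
  (s^+2 + b^+2)^+2 / 2 <= (s^+2 + b^+2)^+2 - c^+2 * s^+2 + 1.
Proof.
move=> c0 cb.
have h1 : c^+2 <= b^+2 by rewrite ler_sqr // nnegrE // (le_trans c0).
have h2 : 0 <= s^+2 := sqr_ge0 s.
have h3 : 0 <= (s^+2 - b^+2)^+2 := sqr_ge0 _.
nra.
Qed.

Lemma alg4 (R : realType) (s b c : R) : 0 <= c -> c <= b ->
  (s^+2 + b^+2)^+2 * (3/4) <= (s^+2 + b^+2)^+2 - c^+2 * s^+2 + 1.
Proof.
move=> c0 cb.
have h1 : c^+2 <= b^+2 by rewrite ler_sqr // nnegrE // (le_trans c0).
have h2 : 0 <= s^+2 := sqr_ge0 s.
have h3 : 0 <= (s^+2 - b^+2)^+2 := sqr_ge0 _.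
nra.
Qed.
Lemma bE (R : realType) (d2 : R) n : 0 < d2 -> 2*pi*ntilde d2 n = pi * n%:R / d2.
Proof. move=> h. rewrite /ntilde. field. by rewrite gt_eqF. Qed.

Lemma cond1 (R : realType) (c d2 : R) n : 0 < c -> 0 < d2 ->
  (n%:R <= d2 * c / (pi * Num.sqrt 2)) = (2 * (2*pi*ntilde d2 n)^+2 <= c^+2).
Proof.
move=> hc hd. rewrite bE //.
have hp := pi_gt0 R. have s2 : 0 < Num.sqrt 2 :> R by rewrite sqrtr_gt0.
have s22 : Num.sqrt 2 ^+ 2 = 2 :> R by rewrite sqr_sqrtr.
have hn : 0 <= n%:R :> R by [].
set X := pi * n%:R.
have hX : 0 <= X by rewrite mulr_ge0 // ltW.
have E1 : (n%:R <= d2 * c / (pi * Num.sqrt 2)) = (X * Num.sqrt 2 <= d2 * c).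
  by rewrite ler_pdivlMr ?mulr_gt0 // /X; congr (_ <= _); ring.
have E2 : 2 * (X / d2)^+2 = (2 * X^+2) / d2^+2 by rewrite expr_div_n mulrA.
rewrite E1 E2 ler_pdivrMr ?exprn_gt0 //.
have h0 : 0 <= X * Num.sqrt 2 by rewrite mulr_ge0 // ltW.
have h1 : 0 <= d2 * c by rewrite mulr_ge0 // ltW.
apply/idP/idP => h.
- have hh : 0 <= d2 * c - X * Num.sqrt 2 by rewrite subr_ge0.
  have := mulr_ge0 hh (addr_ge0 h0 h1).
  move: s22 h0 h1 hh; set s := Num.sqrt 2 => s22 h0 h1 hh.
  have -> : 2 * X^+2 = (X * s)^+2 by rewrite [RHS]exprMn s22 mulrC.
  nra.
- have : (X * Num.sqrt 2)^+2 <= (d2 * c)^+2.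
    move: s22 h0 h1; set s := Num.sqrt 2 => s22 h0 h1.
    rewrite [X in X <= _]exprMn s22; nra.
  rewrite ler_sqr // nnegrE //.
Qed.

Lemma cond2 (R : realType) (c d2 : R) n : 0 < d2 ->
  d2 * c / pi <= n%:R -> c <= 2*pi*ntilde d2 n.
Proof.
move=> hd h. rewrite bE // ler_pdivlMr // mulrC -ler_pdivrMl ?pi_gt0 //.
by rewrite [X in X <= _]mulrC.
Qed.

Lemma part1 (R : realType) (c d2 : R) (hc0 : 0 < c) (hd2 : 0 < d2) (n2 : nat) :
     let m := if n2%:R <= d2 * c / (pi * Num.sqrt 2)
              then c ^+ 2 * (2 * pi * ntilde d2 n2) ^+ 2 + 1 - c ^+ 4 / 4
              else (2 * pi * ntilde d2 n2) ^+ 4 + 1 in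
     (forall xi : R, m <= lfun c d2 n2 xi) /\
     (exists xi : R, lfun c d2 n2 xi = m).
Proof.
rewrite /= cond1 //.
have hp : 0 < pi :> R := pi_gt0 R.
set b := 2 * pi * ntilde d2 n2.
case: ifP => h; split.
- move=> xi; rewrite lfunE -/b; exact: alg1.
- exists (Num.sqrt (c^+2/2 - b^+2) / (2 * pi)).
  rewrite lfunE -/b.
  have -> : 2 * pi * (Num.sqrt (c ^+ 2 / 2 - b ^+ 2) / (2 * pi)) = Num.sqrt (c ^+ 2 / 2 - b ^+ 2).
    by rewrite mulrC divfK // gt_eqF // mulr_gt0.
  rewrite sqr_sqrtr; last by rewrite subr_ge0 ler_pdivlMr //; lra.
  by field.
- move=> xi; rewrite lfunE -/b; apply: alg2; move/negbT: h; rewrite -ltNge; exact: ltW.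
- exists 0; rewrite lfunE -/b. ring.
Qed.

Lemma part2 (R : realType) (c d2 : R) (hc0 : 0 < c) (hd2 : 0 < d2) :
  (forall n2 : nat, d2 * c / pi <= n2%:R ->
     forall xi : R,
       (2 * pi) ^+ 4 / 2 * (ntilde d2 n2 ^+ 2 + xi ^+ 2) ^+ 2 <= lfun c d2 n2 xi).
Proof.
move=> n h xi; have cb := @cond2 R c d2 n hd2 h.
rewrite lfunE.
have -> : (2 * pi) ^+ 4 / 2 * (ntilde d2 n ^+ 2 + xi ^+ 2) ^+ 2 =
   ((2*pi*xi)^+2 + (2*pi*ntilde d2 n)^+2)^+2 / 2 by ring.
apply: alg3 => //; exact: ltW.
Qed.

Lemma lfun_der (R : realType) (c d2 : R) n x : derivable (lfun c d2 n) x 1.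
Proof. rewrite /lfun. apply: ex_derive. Qed.


Section G.
Context {R : realType}.
Variables (a K : R).
Hypotheses (a0 : 0 < a) (K0 : 0 <= K).

Definition gfun (x : R) : R := K * ((2 * a + `|x|) ^+ 8)^-1.
Definition Ffun (x : R) : R := - (K / 7) * ((2 * a + x) ^+ 7)^-1.

Lemma gfun_cont (x : R) : {for x, continuous gfun}.
Proof.
rewrite /gfun.
apply: continuousM; first exact: cvg_cst.
apply: continuousV.
  by rewrite expf_neq0 // gt_eqF // ltr_pwDl ?mulr_gt0.
have h1 : {for x, continuous (fun x : R => 2 * a + `|x|)}.
  apply: continuousD; first exact: cvg_cst.
  exact: norm_continuous.
exact: (continuous_comp h1 (@exprn_continuous R 8 _)).
Qed.

Lemma Ffun_der (x : R) : 0 <= x -> is_derive x 1 Ffun (K * ((2 * a + x) ^+ 8)^-1).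
Proof.
move=> x0.
have h : 2 * a + x != 0 by rewrite gt_eqF // ltr_pwDl ?mulr_gt0.
rewrite /Ffun.
have d1 : is_derive x 1 (fun y : R => 2*a + y) 1.
  have := is_deriveD (is_derive_cst (2*a) x 1) (is_derive_id x 1).
  by rewrite add0r.
have d7 := is_deriveX 7 d1.
have dV := is_deriveV (f := (fun y : R => 2*a + y) ^+ 7) (x := x) (v := 1) (expf_neq0 7 h) d7.
have dF := is_deriveZ (- (K / 7)) dV.
apply: (is_derive_eq dF).
rewrite /= /GRing.scale /= exprfctE.
have h8 : (2 * a + x) ^+ 8 = (2*a+x)^+7 * (2*a+x) by rewrite exprSr.
by rewrite h8 exprSr; field.
Qed.

Lemma Ffun_cvgy : Ffun x @[x --> +oo%R] --> 0.
Proof.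
apply/cvgrPdist_le => e e0.
near=> x.
have hx : 1 + K / (7 * e) < x.
  by near: x; apply: nbhs_pinfty_gt; rewrite num_real.
have Ke : 0 <= K / (7 * e) by rewrite divr_ge0 // mulr_ge0 // ltW.
set y := 2 * a + x.
have y1 : 1 <= y by rewrite /y; have := mulr_gt0 (ltr0n R 2) a0; lra.
have hy : x <= y by rewrite /y; have := mulr_gt0 (ltr0n R 2) a0; lra.
have y7 : y <= y ^+ 7 by rewrite ler_eXnr.
have yp : 0 < y ^+ 7 by rewrite exprn_gt0 //; lra.
set w := (y ^+ 7)^-1.
have w0 : 0 < w by rewrite invr_gt0.
have wy : w * y ^+ 7 = 1 by rewrite mulVf // gt_eqF.
have wy1 : w * y <= 1 by rewrite -wy ler_pM2l.
have Kle : K / 7 <= e * y.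
  have : K / (7 * e) * e = K / 7 by field; rewrite gt_eqF.
  nra.
rewrite /Ffun -/y -/w sub0r normrN normrM normrN (ger0_norm (ltW w0)) ger0_norm; last by rewrite divr_ge0.
nra.
Unshelve. all: by end_near.
Qed.

Let mu := @lebesgue_measure R.

Lemma int_g : (\int[mu]_(x in `[0%R, +oo[) (gfun x)%:E = (K / (7 * (2*a)^+7))%:E)%E.
Proof.
have h0 : 2 * a != 0 by rewrite gt_eqF // mulr_gt0.
rewrite (@ge0_continuous_FTC2y R gfun Ffun 0 0).
- rewrite sub0e /Ffun addr0 -EFinN; congr EFin; field; by rewrite gt_eqF.
- by move=> x x0; rewrite /gfun mulr_ge0 // invr_ge0 exprn_ge0 // addr_ge0 // mulr_ge0 // ltW.
- by apply: continuous_in_subspaceT => x _; exact: gfun_cont.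
- exact: Ffun_cvgy.
- by move=> x x0; case: (Ffun_der x (ltW x0)).
- apply: cvg_at_right_filter.
  apply: differentiable_continuous; apply/derivable1_diffP.
  by case: (Ffun_der 0 (lexx 0)).
- move=> x; rewrite in_itv /= andbT => x0.
  have := Ffun_der x (ltW x0); rewrite derive1E; move=> [_ ->]; rewrite /gfun ger0_norm //; exact: ltW.
Qed.
End G.


Section Term.
Context {R : realType}.
Variables (c d2 : R) (n : nat).
Hypotheses (c0 : 0 < c) (d0 : 0 < d2) (n0 : (0 < n)%N) (cb : c <= 2 * pi * ntilde d2 n).

Let a := ntilde d2 n.
Let K : R := 16 / 9 * 625 / (2 * pi) ^+ 8.

Lemma a_gt0 : 0 < a.
Proof. by rewrite /a /ntilde divr_gt0 ?ltr0n // mulr_gt0. Qed.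

Lemma lfun_low (x : R) : (2 * pi * x)^+2 + (2 * pi * a)^+2 > 0 ->
  ((2 * pi * x)^+2 + (2 * pi * a)^+2)^+2 * (3/4) <= lfun c d2 n x.
Proof. move=> _; rewrite lfunE; apply: alg4 => //; exact: ltW. Qed.

Lemma lfun_low2 (x : R) : 0 <= x ->
  3 / 100 * (2 * pi)^+4 * (2 * a + x)^+4 <= lfun c d2 n x.
Proof.
move=> x0.
have hp : 0 < pi :> R := pi_gt0 R.
have ha := a_gt0.
have s0 : 0 < (2 * pi * x)^+2 + (2 * pi * a)^+2.
  have := mulr_gt0 (mulr_gt0 (ltr0n R 2) hp) ha.
  have := sqr_ge0 (2*pi*x). nra.
apply: le_trans _ (lfun_low x s0).
have -> : ((2 * pi * x)^+2 + (2 * pi * a)^+2)^+2 * (3/4) =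
  3/4 * (2 * pi)^+4 * (x^+2 + a^+2)^+2 by ring.
have q : (2 * a + x)^+2 <= 5 * (x^+2 + a^+2).
  have := sqr_ge0 (2 * x - a); nra.
have q2 : (2 * a + x)^+4 <= 25 * (x^+2 + a^+2)^+2.
  have -> : (2 * a + x)^+4 = ((2 * a + x)^+2)^+2 by rewrite -exprM.
  have -> : 25 * (x^+2 + a^+2)^+2 = (5 * (x^+2 + a^+2))^+2 by ring.
  rewrite ler_sqr ?nnegrE ?sqr_ge0 //. 
  by rewrite mulr_ge0 // addr_ge0 // sqr_ge0.
have p4 : 0 <= (2 * pi)^+4 :> R by rewrite exprn_ge0 // mulr_ge0 // ltW.
nra.
Qed.

Lemma lfun_gt0 (x : R) : 0 < lfun c d2 n x.
Proof.
have hp : 0 < pi :> R := pi_gt0 R.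
have ha := a_gt0.
have s0 : 0 < (2 * pi * x)^+2 + (2 * pi * a)^+2.
  have := mulr_gt0 (mulr_gt0 (ltr0n R 2) hp) ha.
  have := sqr_ge0 (2*pi*x). nra.
apply: lt_le_trans _ (lfun_low x s0).
by rewrite mulr_gt0 // exprn_gt0.
Qed.

Lemma f_le (x : R) : 0 <= x -> (lfun c d2 n x)^-1 ^+ 2 <= gfun a K x.
Proof.
move=> x0.
have hp : 0 < pi :> R := pi_gt0 R.
have ha := a_gt0.
set L0 := 3 / 100 * (2 * pi)^+4 * (2 * a + x)^+4.
have u : 0 < 2 * a + x by have := mulr_gt0 (ltr0n R 2) ha; lra.
have p2 : 0 < 2 * pi :> R by apply: mulr_gt0.
have L0p : 0 < L0.
  rewrite /L0; apply: mulr_gt0; last exact: exprn_gt0.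
  apply: mulr_gt0; last exact: exprn_gt0.
  by apply: divr_gt0.
have h1 : (lfun c d2 n x)^-1 <= L0^-1.
  by rewrite lef_pV2 ?posrE ?lfun_gt0 // lfun_low2.
have h2 : (lfun c d2 n x)^-1 ^+ 2 <= L0^-1 ^+ 2.
  by rewrite ler_sqr ?nnegrE ?invr_ge0 ?(ltW (lfun_gt0 x)) ?(ltW L0p).
apply: (le_trans h2).
rewrite /gfun /K /L0 ger0_norm // le_eqVlt; apply/orP; left; apply/eqP.
move: p2 u; generalize (2 * pi : R); generalize (2 * a + x) => y p yp pp.
by field; rewrite !gt_eqF.
Qed.

Let mu := @lebesgue_measure R.

Lemma K_ge0 : 0 <= K.
Proof.
rewrite /K; apply: divr_ge0; last by apply: exprn_ge0; apply: mulr_ge0 => //; exact: pi_ge0.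
apply: mulr_ge0; last exact: ler0n.
apply: divr_ge0; exact: ler0n.
Qed.

Lemma term_bound : (L2sq_inv_l c d2 n <= (2 * (K / (7 * (2 * a)^+7)))%:E)%E.
Proof.
rewrite /L2sq_inv_l.
set f := fun x => (lfun c d2 n x)^-1 ^+ 2.
have fc : continuous f.
  move=> x.
  have h1 : {for x, continuous (fun y => (lfun c d2 n y)^-1)}.
    apply: continuousV; first by rewrite gt_eqF // lfun_gt0.
    apply: differentiable_continuous; apply/derivable1_diffP.
    exact: lfun_der.
  exact: (continuous_comp h1 (@exprn_continuous R 2 _)).
have fe : f =1 f \o -%R.
  by move=> x; rewrite /f /= /lfun !mulrN !sqrrN.
have f0 : forall x, 0 <= f x by move=> x; exact: sqr_ge0.
rewrite (ge0_symfun_integralT f0 fc fe) EFinM.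
apply: lee_wpmul2l; first by rewrite lee_fin.
rewrite -set_itvcy -(int_g a K a_gt0 K_ge0).
apply: ge0_le_integral => //.
- by move=> x _; rewrite lee_fin f0.
- apply/measurable_EFinP; apply: measurable_funTS.
  exact: continuous_measurable_fun.
- apply/measurable_EFinP; apply: measurable_funTS.
  apply: continuous_measurable_fun => x; exact: (gfun_cont a K a_gt0 x).
- move=> x; rewrite /= in_itv /= andbT => x0.
  by rewrite lee_fin f_le.
Qed.
End Term.



Lemma key (R : realType) (m : R) : 0 < m ->
  ((m + 1) ^+ 7)^-1 + (6 * (m + 1) ^+ 6)^-1 <= (6 * m ^+ 6)^-1.
Proof.
move=> m0.
have m1 : 0 < m + 1 by lra.
have p6 : 0 < m ^+ 6 by rewrite exprn_gt0.
have q6 : 0 < (m+1) ^+ 6 by rewrite exprn_gt0.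
have q7 : 0 < (m+1) ^+ 7 by rewrite exprn_gt0.
rewrite -subr_ge0.
have -> : (6 * m ^+ 6)^-1 - (((m + 1) ^+ 7)^-1 + (6 * (m + 1) ^+ 6)^-1)
  = (21 * m ^+ 5 + 35 * m ^+ 4 + 35 * m ^+ 3 + 21 * m ^+ 2 + 7 * m + 1) / (6 * m ^+ 6 * (m + 1) ^+ 7).
  by field; rewrite !gt_eqF.
apply: divr_ge0; last by apply: ltW; rewrite !mulr_gt0.
have := exprn_gt0 5 m0; have := exprn_gt0 4 m0; have := exprn_gt0 3 m0; have := exprn_gt0 2 m0.
lra.
Qed.

Lemma tele (R : realType) (N : nat) : (0 < N)%N -> forall k : nat,
  \sum_(N.+1 <= n < N.+1 + k) ((n%:R : R) ^+ 7)^-1 + (6 * (N + k)%:R ^+ 6)^-1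
    <= (6 * (N%:R : R) ^+ 6)^-1.
Proof.
move=> N0; elim=> [|k IH].
  by rewrite !addn0 big_geq // add0r.
rewrite addnS big_nat_recr /=; last by rewrite leq_addr.
have h : (0 < (N + k)%:R :> R) by rewrite ltr0n addn_gt0 N0.
have {}h := @key R ((N + k)%:R) h.
apply: le_trans _ IH.
rewrite -addrA lerD2l.
have -> : (N.+1 + k)%:R = (N + k)%:R + 1 :> R by rewrite addSn -natr1.
have -> : (N + k.+1)%:R = (N + k)%:R + 1 :> R by rewrite addnS -natr1.
exact: h.
Qed.


Lemma final_ineq (R : realType) (p d Nr : R) : 4 <= p -> 0 < d -> 0 < Nr ->
  2 * (16 / 9 * 625 / p ^+ 8) * d ^+ 7 / 7 * (6 * Nr ^+ 6)^-1
  <= 5 * (2 * d) ^+ 7 / (48 * p ^+ 7 * Nr ^+ 6).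
Proof.
move=> p4 d0 N0.
have p0 : 0 < p by lra.
rewrite -subr_ge0.
have -> : 5 * (2 * d) ^+ 7 / (48 * p ^+ 7 * Nr ^+ 6) -
   2 * (16 / 9 * 625 / p ^+ 8) * d ^+ 7 / 7 * (6 * Nr ^+ 6)^-1
   = d ^+ 7 / (p ^+ 8 * Nr ^+ 6) * (640 / 48 * p - 20000 / 378).
  by field; rewrite !gt_eqF.
apply: mulr_ge0.
  by apply: divr_ge0; [apply: exprn_ge0; lra | apply: mulr_ge0; apply: exprn_ge0; lra].
lra.
Qed.

Lemma part3 (R : realType) (c d2 : R) (hc0 : 0 < c) (hd2 : 0 < d2) :
  (forall N : nat, (0 < N)%N -> d2 * c / pi < N%:R ->
     (\sum_(N.+1 <= n2 <oo) L2sq_inv_l c d2 n2 <=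
      (5 * (2 * d2) ^+ 7 / (48 * (2 * pi) ^+ 7 * N%:R ^+ 6))%:E)%E).
Proof.
move=> N N0 hN.
have hp : 0 < pi :> R := pi_gt0 R.
have p2 : 0 < 2 * pi :> R by apply: mulr_gt0.
set C : R := 2 * (16 / 9 * 625 / (2 * pi) ^+ 8) * d2 ^+ 7 / 7.
have C0 : 0 <= C.
  rewrite /C; apply: divr_ge0; last exact: ler0n.
  apply: mulr_ge0; last by apply: exprn_ge0; exact: ltW.
  apply: mulr_ge0; first exact: ler0n.
  apply: divr_ge0; last by apply: exprn_ge0; exact: ltW.
  apply: mulr_ge0; last exact: ler0n.
  apply: divr_ge0; exact: ler0n.
have tb : forall n, (N < n)%N -> (L2sq_inv_l c d2 n <= (C * (n%:R ^+ 7)^-1)%:E)%E.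
  move=> n Nn.
  have n0 : (0 < n)%N by apply: leq_ltn_trans Nn.
  have cb : c <= 2 * pi * ntilde d2 n.
    apply: (@cond2 R c d2 n hd2); apply: ltW; apply: lt_le_trans hN _.
    by rewrite ler_nat ltnW.
  apply: le_trans (term_bound c d2 n hc0 hd2 n0 cb) _.
  rewrite lee_fin le_eqVlt; apply/orP; left; apply/eqP.
  rewrite /C /ntilde.
  have nr : 0 < n%:R :> R by rewrite ltr0n.
  move: p2 nr; generalize (2 * pi : R); generalize (n%:R : R) => y p yp pp.
  by field; rewrite pnatr_eq0 -lt0n n0 !gt_eqF.
apply: lime_le.
  apply: is_cvg_nneseries => n _ _.
  by rewrite /L2sq_inv_l; apply: integral_ge0 => x _; rewrite lee_fin; exact: sqr_ge0.
apply: nearW => M.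
apply: (@le_trans _ _ (\sum_(N.+1 <= n < M) (C * (n%:R ^+ 7)^-1)%:E)%E).
  rewrite big_nat_cond [X in (_ <= X)%E]big_nat_cond.
  by apply: lee_sum => n /andP[/andP[Nn _] _]; exact: tb.
rewrite sumEFin lee_fin.
have S : \sum_(N.+1 <= n < M) C * (n%:R ^+ 7)^-1 <= C * (6 * N%:R ^+ 6)^-1.
  rewrite -mulr_sumr; apply: ler_wpM2l => //.
  case: (leqP M N.+1) => hM.
    rewrite big_geq //; apply: ltW; rewrite invr_gt0 mulr_gt0 // exprn_gt0 // ltr0n.
  have := @tele R N N0 (M - N.+1); rewrite subnKC; last exact: ltnW.
  move=> h; apply: le_trans _ h.
  rewrite lerDl invr_ge0 mulr_ge0 // exprn_ge0 //.
apply: le_trans S _.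
apply: final_ineq => //; last by rewrite ltr0n.
have := pi_ge2 R; lra.
Qed.

Local Close Scope classical_set_scope.

Theorem lemma7p1 (R : realType) (c d2 : R)
  (hc0 : 0 < c) (hc1 : c < Num.sqrt 2) (hd2 : 0 < d2) :
  (* minimum of l_{n_2} over R *)
  (forall n2 : nat,
     let m := if n2%:R <= d2 * c / (pi * Num.sqrt 2)
              then c ^+ 2 * (2 * pi * ntilde d2 n2) ^+ 2 + 1 - c ^+ 4 / 4
              else (2 * pi * ntilde d2 n2) ^+ 4 + 1 in
     (forall xi : R, m <= lfun c d2 n2 xi) /\
     (exists xi : R, lfun c d2 n2 xi = m)) /\
  (* lower bound for large n_2 *)
  (forall n2 : nat, d2 * c / pi <= n2%:R ->
     forall xi : R,
       (2 * pi) ^+ 4 / 2 * (ntilde d2 n2 ^+ 2 + xi ^+ 2) ^+ 2 <= lfun c d2 n2 xi) /\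
  (* tail estimate *)
  (forall N : nat, (0 < N)%N -> d2 * c / pi < N%:R ->
     (\sum_(N.+1 <= n2 <oo) L2sq_inv_l c d2 n2 <=
      (5 * (2 * d2) ^+ 7 / (48 * (2 * pi) ^+ 7 * N%:R ^+ 6))%:E)%E).
Proof.
split; first by move=> n2; exact: (@part1 R c d2 hc0 hd2 n2).
split; first exact: (@part2 R c d2 hc0 hd2).
exact: (@part3 R c d2 hc0 hd2).
Qed.
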